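(* Let $G=(V,E)$ be a finite connected simple graph, let $m_0\colon V\to\mathbb{R}_{>0}$ be a vertex-weight and $d\colon E\to\mathbb{R}_{>0}$ a distance parameter, and set $M=\sum_{u\in V}m_0(u)$, $D^2=\sum_{uv\in E}d(uv)^2$. Let $m_1\colon E\to\mathbb{R}_{\ge 0}$ be an edge-weight such that the graph $(V,\{uv\in E: m_1(uv)>0\})$ is connected and $\sum_{uv\in E}m_1(uv)d(uv)^2=D^2$. Then $$\delta(G,m_0,d)\ \ge\ 1-\frac{D^2/M}{\lambda_1(G,(m_0,m_1))}.$$ Moreover, equality holds if and only if there exists a map $\varphi\colon V\to\mathbb{R}^{|V|}$ satisfying $\sum_{u\in V}m_0(u)\|\varphi(u)\|^2=M$ and $\|\varphi(u)-\varphi(v)\|\le d(uv)$ for all $uv\in E$, such that (i) $m_1(uv)\big(d(uv)^2-\|\varphi(u)-\varphi(v)\|^2\big)=0$ for all $uv\in E$, and (ii) $\Delta_{(m_0,m_1)}\varphi=\lambda_1(G,(m_0,m_1))\,(\varphi-\mathrm{bar}(\varphi))$, where $\Delta_{(m_0,m_1)}$ is applied componentwise (i.e. each component of $\varphi-\mathrm{bar}(\varphi)$ is an eigenvector of $\Delta_{(m_0,m_1)}$ for the eigenvalue $\lambda_1(G,(m_0,m_1))$).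
   Context: Edges are unordered pairs $uv=vu$; write $v\sim u$ if $uv\in E$. $\|\cdot\|$ is the Euclidean norm on $\mathbb{R}^{|V|}$. For $\varphi\colon V\to\mathbb{R}^{|V|}$, the affine barycenter is $\mathrm{bar}(\varphi)=\frac1M\sum_{u\in V}m_0(u)\varphi(u)$. Define $\delta(G,m_0,d)=\inf_\varphi\|\mathrm{bar}(\varphi)\|^2$, the infimum over all maps $\varphi\colon V\to\mathbb{R}^{|V|}$ with $\sum_{u\in V}m_0(u)\|\varphi(u)\|^2=M$ and $\|\varphi(u)-\varphi(v)\|\le d(uv)$ for all $uv\in E$. For an edge-weight $m_1\colon E\to\mathbb{R}_{\ge0}$, the Laplacian $\Delta_{(m_0,m_1)}$ acts on functions $f\colon V\to\mathbb{R}$ by $(\Delta_{(m_0,m_1)}f)(u)=\frac{1}{m_0(u)}\big[(\sum_{v\sim u}m_1(uv))f(u)-\sum_{v\sim u}m_1(uv)f(v)\big]$; it is symmetric and nonnegative for the inner product $\langle f_1,f_2\rangle=\sum_u m_0(u)f_1(u)f_2(u)$, and when $(V,\{uv: m_1(uv)>0\})$ is connected its kernel is the constants. $\lambda_1(G,(m_0,m_1))$ denotes its smallest positive eigenvalue, equivalently $\inf_f \frac{\sum_{uv\in E}m_1(uv)(f(u)-f(v))^2}{\sum_{u}m_0(u)(f(u)-\bar f)^2}$ over nonconstant $f$, with $\bar f=\frac1M\sum_u m_0(u)f(u)$. *)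

(* Defs.v *)
From mathcomp Require Import all_boot all_order all_algebra.
From mathcomp Require Import classical_sets reals.
Set Implicit Arguments. Unset Strict Implicit. Unset Printing Implicit Defensive.
Import Order.TTheory GRing.Theory Num.Theory.
Local Open Scope ring_scope.


Section Defs.
Variables (R : realType) (V : finType).

Definition simple_edges (E : {set {set V}}) : Prop :=
  forall e, e \in E -> #|e| = 2%N.

Definition adj (E : {set {set V}}) : rel V := fun u v => [set u; v] \in E.

Definition connected_graph (E : {set {set V}}) : Prop :=
  forall u v, connect (adj E) u v.

Definition support_connected (E : {set {set V}}) (m1 : {set V} -> R) : Prop :=
  forall u v, connect (fun x y => adj E x y && (0 < m1 [set x; y])) u v.

Definition mass (m0 : V -> R) : R := \sum_(u : V) m0 u.
Definition Dsq (E : {set {set V}}) (d : {set V} -> R) : R := \sum_(e in E) d e ^+ 2.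

Definition enorm (x : 'rV[R]_#|V|) : R := Num.sqrt (\sum_(i < #|V|) x 0 i ^+ 2).

Definition bar (m0 : V -> R) (phi : V -> 'rV[R]_#|V|) : 'rV[R]_#|V| :=
  (mass m0)^-1 *: \sum_(u : V) m0 u *: phi u.

Definition admissible (E : {set {set V}}) (m0 : V -> R) (d : {set V} -> R)
  (phi : V -> 'rV[R]_#|V|) : Prop :=
  \sum_(u : V) m0 u * enorm (phi u) ^+ 2 = mass m0 /\
  forall u v, [set u; v] \in E -> enorm (phi u - phi v) <= d [set u; v].

Definition delta (E : {set {set V}}) (m0 : V -> R) (d : {set V} -> R) : R :=
  inf [set x | exists phi, admissible E m0 d phi /\ x = enorm (bar m0 phi) ^+ 2]%classic.

Definition lap (E : {set {set V}}) (m0 : V -> R) (m1 : {set V} -> R)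
  (f : V -> R) (u : V) : R :=
  (m0 u)^-1 * ((\sum_(v | adj E u v) m1 [set u; v]) * f u
               - \sum_(v | adj E u v) m1 [set u; v] * f v).

Definition lambda1 (E : {set {set V}}) (m0 : V -> R) (m1 : {set V} -> R) : R :=
  inf [set l | 0 < l /\ exists f : V -> R, (exists u, f u != 0) /\
                 forall u, lap E m0 m1 f u = l * f u]%classic.

End Defs.

(* Main.v *)
Require Import Defs.
From mathcomp Require Import all_boot all_order all_algebra.
From mathcomp Require Import classical_sets reals.
From mathcomp Require Import boolp topology normedtype derive.
From mathcomp Require Import ring lra.
Import Order.TTheory GRing.Theory Num.Theory.
Import numFieldNormedType.Exports.
Local Open Scope ring_scope.

Definition aw {R : realType} {V : finType} (E : {set {set V}}) (m1 : {set V} -> R) (u v : V) : R :=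
  if adj E u v then m1 [set u; v] else 0.

Lemma adj_sym {V : finType} (E : {set {set V}}) u v : adj E u v = adj E v u.
Proof. by rewrite /adj finset.setUC. Qed.

Lemma aw_sym {R : realType} {V : finType} (E : {set {set V}}) (m1 : {set V} -> R) u v :
  aw E m1 u v = aw E m1 v u.
Proof. by rewrite /aw adj_sym finset.setUC. Qed.

Lemma aw_ge0 {R : realType} {V : finType} (E : {set {set V}}) (m1 : {set V} -> R) u v :
  (forall e, e \in E -> 0 <= m1 e) -> 0 <= aw E m1 u v.
Proof. by move=> H; rewrite /aw; case: ifP => // h; apply: H. Qed.

Lemma lapE {R : realType} {V : finType} (E : {set {set V}}) (m0 : V -> R) m1 f u :
  m0 u != 0 -> m0 u * lap E m0 m1 f u = \sum_v aw E m1 u v * (f u - f v).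
Proof.
move=> h; rewrite /lap mulrA mulfV // mul1r mulr_suml -sumrB big_mkcond /=.
apply: eq_bigr => v _; rewrite /aw; case: (adj E u v) => /=; last by rewrite mul0r.
by rewrite mulrBr.
Qed.

Definition Bf {R : realType} {V : finType} (E : {set {set V}}) (m1 : {set V} -> R) (g f : V -> R) :=
  \sum_u \sum_v aw E m1 u v * ((g u - g v) * (f u - f v)).

Lemma ipL {R : realType} {V : finType} (E : {set {set V}}) (m0 : V -> R) m1 g f :
  (forall u, 0 < m0 u) ->
  2 * \sum_u m0 u * (g u * lap E m0 m1 f u) = Bf E m1 g f.
Proof.
move=> hm.
have e1 : \sum_u m0 u * (g u * lap E m0 m1 f u) =
   \sum_u \sum_v aw E m1 u v * (g u * (f u - f v)).
  apply: eq_bigr => u _; rewrite mulrCA lapE ?gt_eqF // mulr_sumr.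
  by apply: eq_bigr => v _; ring.
have e2 : \sum_u \sum_v aw E m1 u v * (g u * (f u - f v)) =
   \sum_u \sum_v aw E m1 u v * (- (g v * (f u - f v))).
  rewrite exchange_big; apply: eq_bigr => u _; apply: eq_bigr => v _.
  by rewrite aw_sym; ring.
have -> : forall X : R, 2 * X = X + X by move=> X; ring.
rewrite e1 {2}e2 -big_split; apply: eq_bigr => u _; rewrite -big_split.
by apply: eq_bigr => v _ /=; ring.
Qed.

Lemma lap_sum0 {R : realType} {V : finType} (E : {set {set V}}) (m0 : V -> R) m1 f :
  (forall u, 0 < m0 u) -> \sum_u m0 u * lap E m0 m1 f u = 0.
Proof.
move=> hm; have := ipL E m0 m1 (fun _ => 1) f hm.
have -> : Bf E m1 (fun _ => 1) f = 0.
  by apply: big1 => u _; apply: big1 => v _; rewrite subrr mul0r mulr0.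
move/eqP; rewrite mulf_eq0 pnatr_eq0 /= => /eqP H.
by rewrite -[RHS]H; apply: eq_bigr => u _; rewrite mul1r.
Qed.
Lemma quad0 {R : realType} (c b : R) : (forall t, 0 <= t * c + t ^+ 2 * b) -> c = 0.
Proof.
move=> H; pose k := `|b| + 1.
have k0 : 0 < k by rewrite /k ltr_pwDr // normr_ge0.
have := H (- c / k).
have -> : - c / k * c + (- c / k) ^+ 2 * b = c ^+ 2 * (b - k) / k ^+ 2.
  by field; rewrite gt_eqF.
have bk : b - k < 0 by rewrite /k; have := ler_norm b; lra.
move=> h; apply/eqP; rewrite -sqrf_eq0 eq_le sqr_ge0 andbT.
have k2 : 0 < k ^+ 2 by rewrite exprn_gt0.
rewrite -(pmulr_rle0 _ k2).
move: h; rewrite mulrC pmulr_rge0 ?invr_gt0 //.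
move=> h; rewrite mulrC; nra.
Qed.

Definition Nf {R : realType} {V : finType} (m0 : V -> R) (f : V -> R) : R :=
  \sum_u m0 u * f u ^+ 2.
Definition Qh {R : realType} {V : finType} (E : {set {set V}}) (m0 : V -> R) m1 (f : V -> R) : R :=
  \sum_u m0 u * (f u * lap E m0 m1 f u).

Lemma Bf_expand {R : realType} {V : finType} (E : {set {set V}}) (m1 : {set V} -> R) g h (t : R) :
  Bf E m1 (fun u => g u + t * h u) (fun u => g u + t * h u) =
  Bf E m1 g g + 2 * t * Bf E m1 h g + t ^+ 2 * Bf E m1 h h.
Proof.
rewrite /Bf !mulr_sumr -!big_split; apply: eq_bigr => u _ /=.
rewrite !mulr_sumr -!big_split; apply: eq_bigr => v _ /=; ring.
Qed.

Lemma Nf_expand {R : realType} {V : finType} (m0 : V -> R) g h (t : R) :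
  Nf m0 (fun u => g u + t * h u) =
  Nf m0 g + 2 * t * (\sum_u m0 u * (h u * g u)) + t ^+ 2 * Nf m0 h.
Proof.
rewrite /Nf !mulr_sumr -!big_split; apply: eq_bigr => u _ /=; ring.
Qed.

Lemma Qh_Bf {R : realType} {V : finType} (E : {set {set V}}) (m0 : V -> R) m1 f :
  (forall u, 0 < m0 u) -> 2 * Qh E m0 m1 f = Bf E m1 f f.
Proof. by move=> hm; rewrite /Qh ipL. Qed.

Lemma variational {R : realType} {V : finType} (E : {set {set V}}) (m0 : V -> R) m1 (mu : R) g :
  (forall u, 0 < m0 u) ->
  (forall h, \sum_u m0 u * h u = 0 -> mu * Nf m0 h <= Qh E m0 m1 h) ->
  \sum_u m0 u * g u = 0 -> Qh E m0 m1 g = mu * Nf m0 g ->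
  forall u, lap E m0 m1 g u = mu * g u.
Proof.
move=> hm Hmin g0 geq.
pose w u := lap E m0 m1 g u - mu * g u.
have key : forall h, \sum_u m0 u * h u = 0 -> \sum_u m0 u * (h u * w u) = 0.
  move=> h h0.
  set L := \sum_u m0 u * (h u * lap E m0 m1 g u).
  set I := \sum_u m0 u * (h u * g u).
  have HB : Bf E m1 h g = 2 * L by rewrite -(ipL E m0 m1 h g hm).
  have -> : \sum_u m0 u * (h u * w u) = L - mu * I.
    by rewrite /L /I mulr_sumr -sumrB; apply: eq_bigr => u _; rewrite /w; ring.
  have Hq : forall t, 0 <= t * (2 * (L - mu * I)) + t ^+ 2 * (Qh E m0 m1 h - mu * Nf m0 h).
    move=> t.
    have hz : \sum_u m0 u * (g u + t * h u) = 0.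
      have -> : \sum_u m0 u * (g u + t * h u) = \sum_u m0 u * g u + t * \sum_u m0 u * h u.
        by rewrite mulr_sumr -big_split; apply: eq_bigr => u _ /=; ring.
      by rewrite g0 h0 mulr0 addr0.
    have := Hmin _ hz.
    have eQ : Qh E m0 m1 (fun u => g u + t * h u) =
        Qh E m0 m1 g + 2 * t * L + t ^+ 2 * Qh E m0 m1 h.
      apply: (@mulfI _ 2); first by rewrite pnatr_eq0.
      rewrite Qh_Bf // Bf_expand HB -(Qh_Bf E m0 m1 g hm) -(Qh_Bf E m0 m1 h hm); ring.
    rewrite eQ Nf_expand -/I geq => hle.
    have -> : t * (2 * (L - mu * I)) + t ^+ 2 * (Qh E m0 m1 h - mu * Nf m0 h) =
      (mu * Nf m0 g + 2 * t * L + t ^+ 2 * Qh E m0 m1 h) -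
      mu * (Nf m0 g + 2 * t * I + t ^+ 2 * Nf m0 h) by ring.
    by rewrite subr_ge0.
  have /eqP := quad0 _ _ Hq.
  by rewrite mulf_eq0 pnatr_eq0 /= => /eqP.
have w0 : \sum_u m0 u * w u = 0.
  have -> : \sum_u m0 u * w u = \sum_u m0 u * lap E m0 m1 g u - mu * \sum_u m0 u * g u.
    by rewrite mulr_sumr -sumrB; apply: eq_bigr => u _; rewrite /w; ring.
  by rewrite lap_sum0 // g0; ring.
have := key w w0.
move/eqP; rewrite psumr_eq0; last first.
  by move=> u _; have := hm u; nra.
move/allP => H u; have /H : u \in index_enum V by rewrite mem_index_enum.
rewrite mulf_eq0 gt_eqF //= mulf_eq0 orbb /w subr_eq0 => /eqP //.
Qed.

Lemma cont_add {R : realType} {K : nat} (f g : 'rV[R]_K -> R) :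
  continuous f -> continuous g -> continuous (fun x => f x + g x).
Proof. move=> hf hg x. apply: continuousD; [exact: hf | exact: hg]. Qed.

Lemma cont_mul {R : realType} {K : nat} (f g : 'rV[R]_K -> R) :
  continuous f -> continuous g -> continuous (fun x => f x * g x).
Proof. move=> hf hg x. apply: continuousM; [exact: hf | exact: hg]. Qed.

Lemma cont_cst {R : realType} {K : nat} (c : R) : continuous (fun _ : 'rV[R]_K => c).
Proof. exact: cst_continuous. Qed.

Lemma cont_coord {R : realType} {K : nat} k : continuous (fun x : 'rV[R]_K => x 0 k).
Proof. exact: coord_continuous. Qed.

Lemma cont_sum {R : realType} {K : nat} (I : finType) (F : I -> 'rV[R]_K -> R) :
  (forall i, continuous (F i)) -> continuous (fun x => \sum_i F i x).
Proof.
move=> hF; rewrite unlock /=; elim: (index_enum I) => [|a r IH] /=.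
  exact: cont_cst.
exact: cont_add.
Qed.

Lemma rV_argmin {R : realType} {K : nat} (A : set 'rV[R]_K) (J : 'rV[R]_K -> R) (C : R) :
  (A !=set0)%classic -> closed A -> (forall x, A x -> forall k, `|x 0 k| <= C) -> continuous J ->
  exists2 x, A x & forall y, A y -> J x <= J y.
Proof.
move=> A0 Acl Ab Jc.
have cA : compact A.
  have Mnco : compact
      [set v : 'rV[R]_K | forall i, (`[(- C), C]%classic : set R) (v ord0 i)]%classic.
    apply: (@rV_compact _  _ (fun=> `[(- C), C]%classic)).
    by move=> _; apply: segment_compact.
  apply: subclosed_compact Acl Mnco _ => x /Ab H i.
  by rewrite /= in_itv /= -ler_norml; exact: H.
have [x xA xmin] := compact_EVT_min A0 cA (@continuous_subspaceT _ _ A J Jc).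
exists x; first by move: xA; rewrite inE.
by move=> y yA; apply: xmin; rewrite inE.
Qed.

Lemma cont_sub {R : realType} {K : nat} (f g : 'rV[R]_K -> R) :
  continuous f -> continuous g -> continuous (fun x => f x - g x).
Proof. move=> hf hg x. apply: continuousB; [exact: hf | exact: hg]. Qed.

Lemma coord_bound {R : realType} (a m S : R) : 0 < m -> m * a ^+ 2 <= S -> `|a| <= 1 + S / m.
Proof.
move=> m0 h.
have h1 : a ^+ 2 <= S / m.
  have : 0 <= (S - m * a ^+ 2) / m by apply: divr_ge0; lra.
  have -> : (S - m * a ^+ 2) / m = S / m - a ^+ 2 by field; rewrite gt_eqF.
  lra.
have h2 := sqr_ge0 (`|a| - 1).
have h3 := normr_ge0 a.
have h4 : `|a| ^+ 2 = a ^+ 2 by rewrite real_normK // num_real.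
nra.
Qed.

Lemma connect_const {R : realType} {T : finType} (r : rel T) (g : T -> R) :
  (forall x y, r x y -> g x = g y) -> forall u v, connect r u v -> g u = g v.
Proof.
move=> H u v /connectP [p]; elim: p u => [|w p IH] u /=; first by move=> _ ->.
move=> /andP [ruw pw] hv; rewrite (H _ _ ruw); exact: IH pw hv.
Qed.

Lemma Qh_ge0 {R : realType} {V : finType} (E : {set {set V}}) (m0 : V -> R) m1 h :
  (forall u, 0 < m0 u) -> (forall e, e \in E -> 0 <= m1 e) -> 0 <= Qh E m0 m1 h.
Proof.
move=> hm h1.
have : 0 <= Bf E m1 h h.
  apply: sumr_ge0 => u _; apply: sumr_ge0 => v _.
  apply: mulr_ge0; first exact: aw_ge0.
  by rewrite -expr2 sqr_ge0.
rewrite -(Qh_Bf E m0 m1 h hm); lra.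
Qed.

Lemma Qh_scale {R : realType} {V : finType} (E : {set {set V}}) (m0 : V -> R) m1 h (c : R) :
  (forall u, 0 < m0 u) -> Qh E m0 m1 (fun u => c * h u) = c ^+ 2 * Qh E m0 m1 h.
Proof.
move=> hm; apply: (@mulfI _ 2); first by rewrite pnatr_eq0.
rewrite mulrCA !Qh_Bf // /Bf mulr_sumr; apply: eq_bigr => u _.
rewrite mulr_sumr; apply: eq_bigr => v _; ring.
Qed.

Lemma exists_mz {R : realType} {V : finType} (m0 : V -> R) (a b : V) :
  (forall u, 0 < m0 u) -> a != b ->
  exists f : V -> R, \sum_u m0 u * f u = 0 /\ f a != 0.
Proof.
move=> hm ab.
exists (fun u => if u == a then (m0 a)^-1 else if u == b then - (m0 b)^-1 else 0).
split; last by rewrite eqxx invr_eq0 gt_eqF.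
rewrite (bigD1 a) //= (bigD1 b) /=; last by rewrite eq_sym.
rewrite big1; last by move=> u /andP [/negbTE -> /negbTE ->]; rewrite mulr0.
rewrite eqxx eq_sym (negbTE ab) eqxx mulfV ?gt_eqF // mulrN mulfV ?gt_eqF //.
by rewrite addr0 subrr.
Qed.

Lemma cont_sq {R : realType} {K : nat} (f : 'rV[R]_K -> R) :
  continuous f -> continuous (fun x => f x ^+ 2).
Proof.
move=> hf; rewrite (_ : (fun x => f x ^+ 2) = fun x => f x * f x); first exact: cont_mul.
by apply/funext => x; rewrite expr2.
Qed.

Definition fromR {R : realType} {V : finType} (x : 'rV[R]_#|V|) : V -> R :=
  fun u => x 0 (enum_rank u).
Definition toR {R : realType} {V : finType} (h : V -> R) : 'rV[R]_#|V| :=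
  \row_k h (enum_val k).
Lemma fromR_toR {R : realType} {V : finType} (h : V -> R) : fromR (toR h) = h.
Proof. by apply/funext => u; rewrite /fromR /toR mxE enum_rankK. Qed.

Lemma term_le_sum {R : realType} {I : finType} (F : I -> R) i :
  (forall j, 0 <= F j) -> F i <= \sum_j F j.
Proof.
move=> h; rewrite (bigD1 i) //= lerDl; apply: sumr_ge0 => j _; exact: h.
Qed.

Lemma Nf_scale {R : realType} {V : finType} (m0 : V -> R) h (c : R) :
  Nf m0 (fun u => c * h u) = c ^+ 2 * Nf m0 h.
Proof. by rewrite /Nf mulr_sumr; apply: eq_bigr => u _; ring. Qed.

Lemma Nf_ge0 {R : realType} {V : finType} (m0 : V -> R) h :
  (forall u, 0 < m0 u) -> 0 <= Nf m0 h.
Proof. by move=> hm; apply: sumr_ge0 => u _; apply: mulr_ge0; [exact: ltW | exact: sqr_ge0]. Qed.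

Lemma Nf0 {R : realType} {V : finType} (m0 : V -> R) h :
  (forall u, 0 < m0 u) -> Nf m0 h = 0 -> forall u, h u = 0.
Proof.
move=> hm H u.
have := @psumr_eq0P _ _ _ _ (fun u _ => mulr_ge0 (ltW (hm u)) (sqr_ge0 (h u))) H u isT.
by move/eqP; rewrite mulf_eq0 gt_eqF //= sqrf_eq0 => /eqP.
Qed.

Lemma rayleigh {R : realType} {V : finType} (E : {set {set V}}) (m0 : V -> R) m1 :
  (forall u, 0 < m0 u) -> (forall e, e \in E -> 0 <= m1 e) -> support_connected E m1 ->
  exists mu : R, [/\ 0 <= mu, lambda1 E m0 m1 = mu,
    (forall h, \sum_u m0 u * h u = 0 -> mu * Nf m0 h <= Qh E m0 m1 h) &
    (mu = 0 -> forall h, \sum_u m0 u * h u = 0 -> forall u, h u = 0)].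
Proof.
move=> hm h1 hsc.
have eigmz : forall l f, l != 0 -> (forall u, lap E m0 m1 f u = l * f u) ->
    \sum_u m0 u * f u = 0.
  move=> l f l0 hf; have := lap_sum0 E m0 m1 f hm.
  have -> : \sum_u m0 u * lap E m0 m1 f u = l * \sum_u m0 u * f u.
    by rewrite mulr_sumr; apply: eq_bigr => u _; rewrite hf; ring.
  by move/eqP; rewrite mulf_eq0 (negbTE l0) /= => /eqP.
have eigQ : forall l f, (forall u, lap E m0 m1 f u = l * f u) ->
    Qh E m0 m1 f = l * Nf m0 f.
  move=> l f hf; rewrite /Qh /Nf mulr_sumr; apply: eq_bigr => u _; rewrite hf; ring.
have [[h0 [h0m [u0 h0u]]] | nomz] :=
  pselect (exists h : V -> R, \sum_u m0 u * h u = 0 /\ exists u, h u != 0); last first.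
  have mz0 : forall h, \sum_u m0 u * h u = 0 -> forall u, h u = 0.
    move=> h hz u; have [//|hu] := eqVneq (h u) 0.
    by exfalso; apply: nomz; exists h; split => //; exists u.
  exists 0; split.
  - exact: lexx.
  - rewrite /lambda1; set L := (X in inf X).
    rewrite (_ : L = set0%classic) ?inf0 //.
    apply/seteqP; split => l //= [l0 [f [[u fu] hf]]].
    have l0' : l != 0 by rewrite gt_eqF.
    by rewrite (mz0 f (eigmz l f l0' hf)) eqxx in fu.
  - by move=> h hz; rewrite mul0r; exact: Qh_ge0.
  - by move=> _; exact: mz0.
have cfr : forall u, continuous (fun x : 'rV[R]_#|V| => fromR x u).
  by move=> u; exact: cont_coord.
pose f1 := fun x : 'rV[R]_#|V| => \sum_u m0 u * fromR x u.
pose f2 := fun x : 'rV[R]_#|V| => Nf m0 (fromR x).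
have cf1 : continuous f1.
  by apply: cont_sum => u; apply: cont_mul; [exact: cont_cst | exact: cfr].
have cf2 : continuous f2.
  by apply: cont_sum => u; apply: cont_mul; [exact: cont_cst | apply: cont_sq; exact: cfr].
pose A := (f1 @^-1` [set x | x = 0] `&` f2 @^-1` [set x | x = 1])%classic.
have Acl : closed A.
  apply: closedI; apply: preimage_closed.
  - by move=> x _; exact: cf1.
  - exact: closed_eq.
  - by move=> x _; exact: cf2.
  - exact: closed_eq.
have N0pos : 0 < Nf m0 h0.
  rewrite lt_neqAle Nf_ge0 // andbT eq_sym; apply/negP => /eqP N0.
  by move: h0u; rewrite (Nf0 m0 h0 hm N0 u0) eqxx.
have normA : forall h, \sum_u m0 u * h u = 0 -> 0 < Nf m0 h ->
    A (toR (fun u => (Num.sqrt (Nf m0 h))^-1 * h u)).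
  move=> h hz hp; split; rewrite /f1 /f2 /= fromR_toR.
    have -> : \sum_u m0 u * ((Num.sqrt (Nf m0 h))^-1 * h u) =
        (Num.sqrt (Nf m0 h))^-1 * \sum_u m0 u * h u.
      by rewrite mulr_sumr; apply: eq_bigr => u _; ring.
    by rewrite hz mulr0.
  rewrite Nf_scale exprVn sqr_sqrtr ?mulVf ?gt_eqF //; exact: ltW.
have A0 : (A !=set0)%classic.
  by exists (toR (fun u => (Num.sqrt (Nf m0 h0))^-1 * h0 u)); exact: normA.
pose C := 1 + \sum_u 1 / m0 u.
have Ab : forall x, A x -> forall k, `|x 0 k| <= C.
  move=> x [_ /= Hx] k.
  have t1 : m0 (enum_val k) * (x 0 k) ^+ 2 <= 1.
    rewrite -Hx /f2 /Nf.
    have -> : x 0 k = fromR x (enum_val k) by rewrite /fromR enum_valK.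
    apply: (term_le_sum (fun u => m0 u * fromR x u ^+ 2)) => j.
    by apply: mulr_ge0; [exact: ltW | exact: sqr_ge0].
  apply: (le_trans (coord_bound _ _ _ (hm _) t1)); rewrite /C lerD2l.
  apply: (term_le_sum (fun u => 1 / m0 u)) => j.
  by rewrite divr_ge0 ?ltW.
pose J := fun x : 'rV[R]_#|V| => Bf E m1 (fromR x) (fromR x) / 2.
have Jc : continuous J.
  apply: cont_mul; last exact: cont_cst.
  apply: cont_sum => u; apply: cont_sum => v; apply: cont_mul; first exact: cont_cst.
  by apply: cont_mul; apply: cont_sub; exact: cfr.
have JQ : forall x, J x = Qh E m0 m1 (fromR x).
  by move=> x; rewrite /J -(Qh_Bf E m0 m1 _ hm); field.
have [xg [xg1 xg2] xmin] := rV_argmin _ _ _ A0 Acl Ab Jc.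
rewrite /= /f1 /f2 in xg1 xg2.
pose g := fromR xg.
pose mu := Qh E m0 m1 g.
have Hmin : forall h, \sum_u m0 u * h u = 0 -> mu * Nf m0 h <= Qh E m0 m1 h.
  move=> h hz; have [N0|N0] := eqVneq (Nf m0 h) 0.
    by rewrite N0 mulr0; exact: Qh_ge0.
  have Np : 0 < Nf m0 h by rewrite lt_neqAle eq_sym N0 Nf_ge0.
  have := xmin _ (normA h hz Np).
  rewrite !JQ fromR_toR Qh_scale // exprVn (sqr_sqrtr (ltW Np)) -/g -/mu => H.
  by rewrite -(ler_pdivlMr _ _ Np) mulrC.
have mupos : 0 < mu.
  rewrite lt_neqAle Qh_ge0 // andbT eq_sym; apply/negP => /eqP mu0.
  have B0 : Bf E m1 g g = 0 by rewrite -(Qh_Bf E m0 m1 _ hm) -/mu mu0 mulr0.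
  have hnn : forall u v, 0 <= aw E m1 u v * ((g u - g v) * (g u - g v)).
    by move=> u v; apply: mulr_ge0; [exact: aw_ge0 | rewrite -expr2 sqr_ge0].
  have hz : forall u v, aw E m1 u v * ((g u - g v) * (g u - g v)) = 0.
    move=> u v.
    have hu := @psumr_eq0P _ _ _ _ (fun u _ => sumr_ge0 _ (fun v _ => hnn u v)) B0 u isT.
    exact: (@psumr_eq0P _ _ _ _ (fun v _ => hnn u v) hu v isT).
  have gc : forall u v, g u = g v.
    move=> u v; apply: (connect_const _ g _ u v (hsc u v)) => x y /andP [hxy hm1].
    have := hz x y; rewrite /aw hxy => /eqP; rewrite mulf_eq0 gt_eqF //= -expr2 sqrf_eq0 subr_eq0.
    by move/eqP.
  have : \sum_u m0 u * g u = g u0 * \sum_u m0 u.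
    by rewrite mulr_sumr; apply: eq_bigr => u _; rewrite (gc u u0) mulrC.
  rewrite xg1 => /esym/eqP; rewrite mulf_eq0 => /orP [/eqP gu0|].
    have : Nf m0 g = 0.
      by rewrite /Nf big1 // => u _; rewrite (gc u u0) gu0 expr0n mulr0.
    by rewrite /g xg2 => /eqP; rewrite oner_eq0.
  rewrite gt_eqF //; apply: (lt_le_trans (hm u0)).
  by apply: (term_le_sum m0) => j; exact: ltW.
rewrite /lambda1; set L := (X in inf X).
have [[ug gu]|gz] := pselect (exists u, g u != 0); last first.
  exfalso; have : Nf m0 g = 0.
    rewrite /Nf big1 // => u _; have [->|gu] := eqVneq (g u) 0.
      by rewrite expr0n mulr0.
    by exfalso; apply: gz; exists u.
  by rewrite /g xg2 => /eqP; rewrite oner_eq0.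
have geig := variational E m0 m1 mu g hm Hmin xg1 (etrans (erefl mu) (esym (etrans (f_equal (fun t => mu * t) xg2) (mulr1 mu)))).
have muL : L mu.
  by split => //; exists g; split => //; exists ug.
have lbL : lbound L mu.
  move=> l [l0 [f [[u fu] hf]]].
  have l0' : l != 0 by rewrite gt_eqF.
  have fm := eigmz l f l0' hf.
  have Np : 0 < Nf m0 f.
    rewrite lt_neqAle Nf_ge0 // andbT eq_sym; apply/negP => /eqP N0.
    by move: fu; rewrite (Nf0 m0 f hm N0 u) eqxx.
  by have := Hmin f fm; rewrite (eigQ l f hf) ler_pM2r.
exists mu; split.
- exact: ltW.
- apply/eqP; rewrite eq_le; apply/andP; split.
  + have hl : has_lbound L by exists mu.
    exact: (ge_inf hl muL).
  + by apply: lb_le_inf => //; exists mu.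
- exact: Hmin.
- by move=> mu0; rewrite mu0 ltxx in mupos.
Qed.

Lemma enorm2 {R : realType} {V : finType} (x : 'rV[R]_#|V|) :
  enorm x ^+ 2 = \sum_i x 0 i ^+ 2.
Proof. by rewrite /enorm sqr_sqrtr //; apply: sumr_ge0 => i _; exact: sqr_ge0. Qed.

Lemma enorm_ge0 {R : realType} {V : finType} (x : 'rV[R]_#|V|) : 0 <= enorm x.
Proof. exact: sqrtr_ge0. Qed.

Lemma enorm_le {R : realType} {V : finType} (x : 'rV[R]_#|V|) (d : R) :
  0 <= d -> (enorm x <= d) = (\sum_i x 0 i ^+ 2 <= d ^+ 2).
Proof.
move=> d0; rewrite -enorm2.
have H := @ler_sqr R (enorm x) d.
by rewrite H // nnegrE ?enorm_ge0.
Qed.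

Lemma barE {R : realType} {V : finType} (m0 : V -> R) (phi : V -> 'rV[R]_#|V|) i :
  bar m0 phi 0 i = (mass m0)^-1 * \sum_u m0 u * phi u 0 i.
Proof.
rewrite /bar mxE summxE; congr (_ * _); apply: eq_bigr => u _; by rewrite mxE.
Qed.

Lemma sum_if_eq {R : realType} {V : finType} (b : V) (c : R) :
  \sum_v (if v == b then c else 0) = c.
Proof. by rewrite -big_mkcond big_pred1_eq. Qed.

Lemma set2_eq {V : finType} (a b u v : V) : a != b ->
  ([set u; v] == [set a; b]) = ((u == a) && (v == b)) || ((u == b) && (v == a)).
Proof.
move=> ab; apply/idP/idP.
  move/eqP => h.
  have ua : u \in [set a; b] by rewrite -h set21.
  have va : v \in [set a; b] by rewrite -h set22.
  have au : a \in [set u; v] by rewrite h set21.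
  have bu : b \in [set u; v] by rewrite h set22.
  move: ua va au bu; rewrite !inE.
  case/orP => /eqP ->; case/orP => /eqP ->; rewrite ?eqxx //=.
  all: rewrite ?orbT //.
  all: rewrite ?(eq_sym b a) ?(negbTE ab) //.
case/orP => /andP [/eqP -> /eqP ->] //.
by rewrite finset.setUC.
Qed.

Lemma dcount {R : realType} {V : finType} (E : {set {set V}}) (G : {set V} -> R) :
  simple_edges E ->
  \sum_u \sum_v (if adj E u v then G [set u; v] else 0) = 2 * \sum_(e in E) G e.
Proof.
move=> hs.
have step : forall u v, (if adj E u v then G [set u; v] else 0) =
    \sum_(e in E) (if [set u; v] == e then G e else 0).
  move=> u v; rewrite /adj; case: ifP => h.
    rewrite (bigD1 [set u; v]) //= eqxx big1 ?addr0 // => e /andP [_ ne].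
    by rewrite eq_sym (negbTE ne).
  by rewrite big1 // => e eE; case: eqP => // E'; rewrite E' eE in h.
rewrite (eq_bigr (fun u => \sum_(e in E) \sum_v (if [set u; v] == e then G e else 0))); last first.
  by move=> u _; rewrite (eq_bigr _ (fun v _ => step u v)) exchange_big.
rewrite exchange_big mulr_sumr; apply: eq_bigr => e eE.
have /cards2P [a [b [ab ->]]] : #|e| == 2%N by rewrite hs.
have e1 : forall u v, (if [set u; v] == [set a; b] then G [set a; b] else 0) =
   (if (u == a) && (v == b) then G [set a; b] else 0) +
   (if (u == b) && (v == a) then G [set a; b] else 0).
  move=> u v; rewrite set2_eq //.
  by case: (u =P a) => [->|_]; case: (v =P b) => [->|_] //=; rewrite ?eqxx ?(negbTE ab) /= ?addr0 ?add0r.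
have e2 : forall (x y : V) (c : R), \sum_u \sum_v (if (u == x) && (v == y) then c else 0) = c.
  move=> x y c; rewrite (eq_bigr (fun u => if u == x then c else 0)) ?sum_if_eq //.
  move=> u _; case: (u == x) => /=; first exact: sum_if_eq.
  by rewrite big1.
rewrite (eq_bigr (fun u => \sum_v ((if (u == a) && (v == b) then G [set a; b] else 0) +
   (if (u == b) && (v == a) then G [set a; b] else 0)))); last first.
  by move=> u _; apply: eq_bigr => v _; exact: e1.
rewrite (eq_bigr (fun u => \sum_v (if (u == a) && (v == b) then G [set a; b] else 0) +
   \sum_v (if (u == b) && (v == a) then G [set a; b] else 0))); last first.
  by move=> u _; rewrite big_split.
by rewrite big_split /= !e2; ring.
Qed.

Lemma lap_shift {R : realType} {V : finType} (E : {set {set V}}) (m0 : V -> R) m1 f c u :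
  (forall u, 0 < m0 u) ->
  lap E m0 m1 (fun w => f w - c) u = lap E m0 m1 f u.
Proof.
move=> hm; apply: (@mulfI _ (m0 u)); first by rewrite gt_eqF.
rewrite !lapE ?gt_eqF //; apply: eq_bigr => v _; congr (_ * _); ring.
Qed.

Lemma lap_const {R : realType} {V : finType} (E : {set {set V}}) (m0 : V -> R) m1 f c u :
  (forall u, 0 < m0 u) -> (forall w, f w = c) -> lap E m0 m1 f u = 0.
Proof.
move=> hm hf; apply: (@mulfI _ (m0 u)); first by rewrite gt_eqF.
rewrite lapE ?gt_eqF // mulr0 big1 // => v _; by rewrite !hf subrr mulr0.
Qed.

Definition psi {R : realType} {V : finType} (m0 : V -> R) (phi : V -> 'rV[R]_#|V|) i : V -> R :=
  fun u => phi u 0 i - bar m0 phi 0 i.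
Definition Pf {R : realType} {V : finType} (E : {set {set V}}) (m1 : {set V} -> R)
  (phi : V -> 'rV[R]_#|V|) : R :=
  \sum_u \sum_v aw E m1 u v * enorm (phi u - phi v) ^+ 2.

Lemma mass_gt0 {R : realType} {V : finType} (m0 : V -> R) :
  (0 < #|V|)%N -> (forall u, 0 < m0 u) -> 0 < mass m0.
Proof.
move=> /card_gt0P [u _] hm; apply: (lt_le_trans (hm u)).
by apply: (term_le_sum m0) => j; exact: ltW.
Qed.

Lemma psi_mz {R : realType} {V : finType} (m0 : V -> R) phi i :
  0 < mass m0 -> \sum_u m0 u * psi m0 phi i u = 0.
Proof.
move=> hM; rewrite /psi.
have -> : \sum_u m0 u * (phi u 0 i - bar m0 phi 0 i) =
   \sum_u m0 u * phi u 0 i - bar m0 phi 0 i * mass m0.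
  by rewrite /mass mulr_sumr -sumrB; apply: eq_bigr => u _; ring.
rewrite barE; field; by rewrite gt_eqF.
Qed.

Lemma sum_Nf_psi {R : realType} {V : finType} (m0 : V -> R) phi :
  0 < mass m0 -> \sum_u m0 u * enorm (phi u) ^+ 2 = mass m0 ->
  \sum_i Nf m0 (psi m0 phi i) = mass m0 - mass m0 * enorm (bar m0 phi) ^+ 2.
Proof.
move=> hM hphi.
have e1 : forall i, Nf m0 (psi m0 phi i) =
    \sum_u m0 u * phi u 0 i ^+ 2 - mass m0 * bar m0 phi 0 i ^+ 2.
  move=> i; set b := bar m0 phi 0 i.
  have hS : \sum_u m0 u * phi u 0 i = b * mass m0.
    by rewrite /b barE; field; rewrite gt_eqF.
  have -> : Nf m0 (psi m0 phi i) = \sum_u m0 u * phi u 0 i ^+ 2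
      - 2 * b * (\sum_u m0 u * phi u 0 i) + b ^+ 2 * mass m0.
    rewrite /Nf /psi /mass -/b !mulr_sumr -sumrB -big_split /=.
    by apply: eq_bigr => u _; ring.
  by rewrite hS; ring.
rewrite (eq_bigr _ (fun i _ => e1 i)) sumrB exchange_big /=.
rewrite (eq_bigr (fun u => m0 u * enorm (phi u) ^+ 2)); last first.
  by move=> u _; rewrite enorm2 mulr_sumr.
by rewrite hphi enorm2 mulr_sumr.
Qed.

Lemma sum_Qh_psi {R : realType} {V : finType} (E : {set {set V}}) (m0 : V -> R) m1 phi :
  (forall u, 0 < m0 u) ->
  2 * \sum_i Qh E m0 m1 (psi m0 phi i) = Pf E m1 phi.
Proof.
move=> hm.
have -> : 2 * \sum_i Qh E m0 m1 (psi m0 phi i) = \sum_i Bf E m1 (psi m0 phi i) (psi m0 phi i).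
  by rewrite mulr_sumr; apply: eq_bigr => i _; exact: Qh_Bf.
rewrite /Bf /Pf exchange_big; apply: eq_bigr => u _; rewrite exchange_big.
apply: eq_bigr => v _; rewrite enorm2 mulr_sumr; apply: eq_bigr => i _.
by rewrite !mxE /psi; ring.
Qed.

Lemma Pf_le {R : realType} {V : finType} (E : {set {set V}}) (m0 : V -> R) m1 d phi :
  (forall e, e \in E -> 0 <= m1 e) -> admissible E m0 d phi ->
  Pf E m1 phi <= \sum_u \sum_v (if adj E u v then m1 [set u; v] * d [set u; v] ^+ 2 else 0).
Proof.
move=> h1 [_ hd]; apply: ler_sum => u _; apply: ler_sum => v _.
rewrite /aw; case: ifP => h; last by rewrite mul0r.
apply: ler_wpM2l; first exact: h1.
have := hd u v h; have := enorm_ge0 (phi u - phi v); nra.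
Qed.

Definition Xset {R : realType} {V : finType} (E : {set {set V}}) (m0 : V -> R) d :=
  [set x | exists phi, admissible E m0 d phi /\ x = enorm (bar m0 phi) ^+ 2]%classic.

Lemma delta_le {R : realType} {V : finType} (E : {set {set V}}) (m0 : V -> R) d phi :
  admissible E m0 d phi -> delta E m0 d <= enorm (bar m0 phi) ^+ 2.
Proof.
move=> hphi; rewrite /delta.
have hl : has_lbound [set x | exists phi, admissible E m0 d phi /\ x = enorm (bar m0 phi) ^+ 2]%classic.
  by exists 0 => x [p [_ ->]]; exact: sqr_ge0.
by apply: (ge_inf hl); exists phi.
Qed.

Lemma delta_ge {R : realType} {V : finType} (E : {set {set V}}) (m0 : V -> R) d (c : R) :
  (exists phi, admissible E m0 d phi) ->
  (forall phi, admissible E m0 d phi -> c <= enorm (bar m0 phi) ^+ 2) -> c <= delta E m0 d.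
Proof.
move=> [phi hphi] H; rewrite /delta; apply: lb_le_inf.
  by exists (enorm (bar m0 phi) ^+ 2); exists phi.
by move=> x [p [hp ->]]; exact: H.
Qed.

Lemma adm_exists {R : realType} {V : finType} (E : {set {set V}}) (m0 : V -> R) d :
  (0 < #|V|)%N -> (forall e, e \in E -> 0 < d e) -> exists phi, admissible E m0 d phi.
Proof.
move=> hV hd; pose i0 : 'I_#|V| := Ordinal hV.
exists (fun _ => \row_i (if i == i0 then 1 else 0 : R)); split.
  rewrite /mass; apply: eq_bigr => u _; rewrite enorm2.
  rewrite (eq_bigr (fun i => if i == i0 then 1 else 0)) ?sum_if_eq ?mulr1 //.
  by move=> i _; rewrite mxE; case: (i == i0); rewrite ?expr1n ?expr0n.
move=> u v h; rewrite subrr /enorm.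
rewrite big1 ?sqrtr0; first exact: ltW (hd _ h).
by move=> i _; rewrite mxE expr0n.
Qed.

Definition Phi {R : realType} {V : finType} (x : 'rV[R]_(#|V| * #|V|)) (u : V) : 'rV[R]_#|V| :=
  \row_i x 0 (mxvec_index (enum_rank u) i).
Definition Psi {R : realType} {V : finType} (phi : V -> 'rV[R]_#|V|) : 'rV[R]_(#|V| * #|V|) :=
  mxvec (\matrix_(j, i) phi (enum_val j) 0 i).

Lemma PhiPsi {R : realType} {V : finType} (phi : V -> 'rV[R]_#|V|) : Phi (Psi phi) = phi.
Proof.
apply/funext => u; apply/rowP => i.
by rewrite /Phi /Psi mxE mxvecE mxE enum_rankK.
Qed.

Lemma adm_iff {R : realType} {V : finType} (E : {set {set V}}) (m0 : V -> R) d phi :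
  (forall e, e \in E -> 0 < d e) ->
  admissible E m0 d phi <->
  (\sum_u m0 u * \sum_i phi u 0 i ^+ 2 = mass m0 /\
   forall u v, adj E u v -> \sum_i (phi u 0 i - phi v 0 i) ^+ 2 <= d [set u; v] ^+ 2).
Proof.
move=> hd.
have e1 : \sum_u m0 u * enorm (phi u) ^+ 2 = \sum_u m0 u * \sum_i phi u 0 i ^+ 2.
  by apply: eq_bigr => u _; rewrite enorm2.
have e2 : forall u v, adj E u v -> (enorm (phi u - phi v) <= d [set u; v]) =
    (\sum_i (phi u 0 i - phi v 0 i) ^+ 2 <= d [set u; v] ^+ 2).
  move=> u v h; rewrite enorm_le; last exact: ltW (hd _ h).
  by congr (_ <= _); apply: eq_bigr => i _; rewrite !mxE.
split.
  by move=> [h1 h2]; split; [rewrite -e1 | move=> u v h; rewrite -e2 //; exact: h2].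
by move=> [h1 h2]; split; [rewrite e1 | move=> u v h; rewrite e2 //; exact: h2].
Qed.

Lemma delta_attained {R : realType} {V : finType} (E : {set {set V}}) (m0 : V -> R) d :
  (0 < #|V|)%N -> (forall u, 0 < m0 u) -> (forall e, e \in E -> 0 < d e) ->
  exists2 phi, admissible E m0 d phi & delta E m0 d = enorm (bar m0 phi) ^+ 2.
Proof.
move=> hV hm hd.
have cP : forall u i, continuous (fun x : 'rV[R]_(#|V| * #|V|) => Phi x u 0 i).
  move=> u i.
  rewrite (_ : (fun x => Phi x u 0 i) = fun x => x 0 (mxvec_index (enum_rank u) i)).
    exact: cont_coord.
  by apply/funext => x; rewrite /Phi mxE.
pose g1 := fun x : 'rV[R]_(#|V| * #|V|) => \sum_u m0 u * \sum_i Phi x u 0 i ^+ 2.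
pose c := fun (p : V * V) (x : 'rV[R]_(#|V| * #|V|)) =>
  if adj E p.1 p.2 then \sum_i (Phi x p.1 0 i - Phi x p.2 0 i) ^+ 2 - d [set p.1; p.2] ^+ 2
  else 0.
have cg1 : continuous g1.
  apply: cont_sum => u; apply: cont_mul; first exact: cont_cst.
  by apply: cont_sum => i; apply: cont_sq; exact: cP.
have cc : forall p, continuous (c p).
  move=> p; rewrite /c; case: (adj E p.1 p.2); last exact: cont_cst.
  apply: cont_sub; last exact: cont_cst.
  by apply: cont_sum => i; apply: cont_sq; apply: cont_sub; exact: cP.
pose A := (g1 @^-1` [set y | y = mass m0] `&`
   \bigcap_(p in [set: V * V]) (c p @^-1` [set y | y <= 0]))%classic.
have Aiff : forall x, A x <-> admissible E m0 d (Phi x).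
  move=> x; rewrite adm_iff //; split.
    move=> [h1 h2]; split; first exact: h1.
    move=> u v h; have := h2 (u, v) I; rewrite /c /= h subr_le0 => //.
  move=> [h1 h2]; split; first exact: h1.
  move=> [u v] _ /=; rewrite /c /=; case: ifP => h; last exact: lexx.
  by rewrite subr_le0; exact: h2.
have Acl : closed A.
  apply: closedI.
    by apply: preimage_closed; [move=> x _; exact: cg1 | exact: closed_eq].
  apply: closed_bigI => p _.
  by apply: preimage_closed; [move=> x _; exact: cc | exact: closed_le].
have [phi0 hphi0] := adm_exists E m0 d hV hd.
have A0 : (A !=set0)%classic.
  by exists (Psi phi0); apply/Aiff; rewrite PhiPsi.
pose C := 1 + \sum_u mass m0 / m0 u.
have Ab : forall x, A x -> forall k, `|x 0 k| <= C.
  move=> x [/= hx _] k; case/mxvec_indexP: k => j i.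
  set u := enum_val j.
  have ex : x 0 (mxvec_index j i) = Phi x u 0 i by rewrite /Phi mxE /u enum_valK.
  have t1 : m0 u * (x 0 (mxvec_index j i)) ^+ 2 <= mass m0.
    rewrite -hx ex /g1.
    apply: (le_trans _ (term_le_sum (fun u => m0 u * \sum_i Phi x u 0 i ^+ 2) u _)).
      apply: ler_wpM2l; first exact: ltW.
      by apply: (term_le_sum (fun i => Phi x u 0 i ^+ 2)) => i'; exact: sqr_ge0.
    move=> w; apply: mulr_ge0; first exact: ltW.
    by apply: sumr_ge0 => i' _; exact: sqr_ge0.
  apply: (le_trans (coord_bound _ _ _ (hm _) t1)); rewrite /C lerD2l.
  apply: (term_le_sum (fun u => mass m0 / m0 u)) => w.
  by rewrite divr_ge0 ?ltW // mass_gt0.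
pose J := fun x : 'rV[R]_(#|V| * #|V|) =>
  \sum_i ((mass m0)^-1 * \sum_u m0 u * Phi x u 0 i) ^+ 2.
have Jc : continuous J.
  apply: cont_sum => i; apply: cont_sq; apply: cont_mul; first exact: cont_cst.
  by apply: cont_sum => u; apply: cont_mul; [exact: cont_cst | exact: cP].
have JE : forall x, J x = enorm (bar m0 (Phi x)) ^+ 2.
  by move=> x; rewrite enorm2; apply: eq_bigr => i _; rewrite barE.
have [xs xsA xsmin] := rV_argmin _ _ _ A0 Acl Ab Jc.
exists (Phi xs); first exact/Aiff.
apply/eqP; rewrite eq_le delta_le ?andbT; last exact/Aiff.
apply: delta_ge; first by exists phi0.
move=> phi hphi; rewrite -JE.
have := xsmin (Psi phi); rewrite !JE PhiPsi; apply.
by apply/Aiff; rewrite PhiPsi.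
Qed.

Theorem proposition1p5 (R : realType) (V : finType) (E : {set {set V}})
  (m0 : V -> R) (d m1 : {set V} -> R) :
  (0 < #|V|)%N ->
  simple_edges E ->
  connected_graph E ->
  (forall u, 0 < m0 u) ->
  (forall e, e \in E -> 0 < d e) ->
  (forall e, e \in E -> 0 <= m1 e) ->
  support_connected E m1 ->
  \sum_(e in E) m1 e * d e ^+ 2 = Dsq E d ->
  1 - (Dsq E d / mass m0) / lambda1 E m0 m1 <= delta E m0 d /\
  (delta E m0 d = 1 - (Dsq E d / mass m0) / lambda1 E m0 m1 <->
   exists phi : V -> 'rV[R]_#|V|,
     admissible E m0 d phi /\
     (forall u v, [set u; v] \in E ->
        m1 [set u; v] * (d [set u; v] ^+ 2 - enorm (phi u - phi v) ^+ 2) = 0) /\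
     (forall (i : 'I_#|V|) (u : V),
        lap E m0 m1 (fun w => phi w 0 i) u
        = lambda1 E m0 m1 * (phi u 0 i - bar m0 phi 0 i))).
Proof.
move=> hV hs hc hm hd h1 hsc hD.
have hM := mass_gt0 m0 hV hm.
have [mu [mu0 hl Hmin mz0]] := rayleigh E m0 m1 hm h1 hsc.
rewrite hl.
have M0 : mass m0 != 0 by rewrite gt_eqF.
have D2 : \sum_u \sum_v (if adj E u v then m1 [set u; v] * d [set u; v] ^+ 2 else 0)
    = 2 * Dsq E d.
  by rewrite (dcount E (fun e => m1 e * d e ^+ 2) hs) hD.
have Kmz : forall phi i, \sum_u m0 u * psi m0 phi i u = 0.
  by move=> phi i; exact: psi_mz.
have key : forall phi, admissible E m0 d phi ->
   mu * (mass m0 - mass m0 * enorm (bar m0 phi) ^+ 2) <= \sum_i Qh E m0 m1 (psi m0 phi i) /\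
   2 * \sum_i Qh E m0 m1 (psi m0 phi i) <= 2 * Dsq E d.
  move=> phi hphi; split.
    rewrite -sum_Nf_psi //; last by case: hphi.
    by rewrite mulr_sumr; apply: ler_sum => i _; exact: Hmin.
  by rewrite (sum_Qh_psi E m0 m1 phi hm) -D2; exact: (Pf_le E m0 m1 d phi h1 hphi).
have mu0nb : mu = 0 -> forall phi, admissible E m0 d phi -> enorm (bar m0 phi) ^+ 2 = 1.
  move=> m0' phi hphi.
  have : \sum_i Nf m0 (psi m0 phi i) = 0.
    apply: big1 => i _; rewrite /Nf big1 // => u _.
    by rewrite (mz0 m0' _ (Kmz phi i) u) expr0n mulr0.
  rewrite sum_Nf_psi //; last by case: hphi.
  move/eqP; rewrite subr_eq0 => /eqP h.
  by apply: (mulfI M0); rewrite mulr1 -h.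
have part1 : forall phi, admissible E m0 d phi ->
    1 - Dsq E d / mass m0 / mu <= enorm (bar m0 phi) ^+ 2.
  move=> phi hphi.
  have [m0'|mun] := eqVneq mu 0.
    by rewrite m0' invr0 mulr0 subr0 (mu0nb m0' phi hphi).
  have mup : 0 < mu by rewrite lt_neqAle eq_sym mun mu0.
  have [k1 k2] := key phi hphi.
  have h : mu * (mass m0 - mass m0 * enorm (bar m0 phi) ^+ 2) <= Dsq E d by lra.
  have -> : Dsq E d / mass m0 / mu = Dsq E d / (mass m0 * mu) by rewrite invfM mulrA.
  suff : 1 - enorm (bar m0 phi) ^+ 2 <= Dsq E d / (mass m0 * mu) by lra.
  rewrite ler_pdivlMr ?mulr_gt0 //.
  by have -> : (1 - enorm (bar m0 phi) ^+ 2) * (mass m0 * mu) =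
    mu * (mass m0 - mass m0 * enorm (bar m0 phi) ^+ 2) by ring.
have Dge : 1 - Dsq E d / mass m0 / mu <= delta E m0 d.
  by apply: delta_ge; [exact: adm_exists | exact: part1].
split => //.
split.
- move=> hdelta.
  have [phi hphi hdp] := delta_attained E m0 d hV hm hd.
  exists phi; split => //.
  have [m0'|mun] := eqVneq mu 0.
    have noE : forall u v, [set u; v] \in E -> False.
      move=> u v huv.
      have uv : u != v by have := hs _ huv; rewrite cards2; case: (u != v).
      have [f [fz fu]] := exists_mz m0 u v hm uv.
      by rewrite (mz0 m0' f fz u) eqxx in fu.
    split; first by move=> u v /noE.
    move=> i u; rewrite m0' mul0r.
    apply: (lap_const _ _ _ _ (bar m0 phi 0 i)) => // w.
    have := mz0 m0' _ (Kmz phi i) w; rewrite /psi => /eqP; rewrite subr_eq0 => /eqP //.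
  have mup : 0 < mu by rewrite lt_neqAle eq_sym mun mu0.
  have [k1 k2] := key phi hphi.
  have nbE : enorm (bar m0 phi) ^+ 2 = 1 - Dsq E d / mass m0 / mu by rewrite -hdp.
  have eqA : mu * (mass m0 - mass m0 * enorm (bar m0 phi) ^+ 2) = Dsq E d.
    by rewrite nbE; field; rewrite M0 andbT gt_eqF.
  have SD : \sum_i Qh E m0 m1 (psi m0 phi i) = Dsq E d by lra.
  have hNf := sum_Nf_psi m0 phi hM (proj1 hphi).
  split.
    have hP : Pf E m1 phi = 2 * Dsq E d by rewrite -(sum_Qh_psi E m0 m1 phi hm) SD.
    pose r := fun u v => (if adj E u v then m1 [set u; v] * d [set u; v] ^+ 2 else 0)
                          - aw E m1 u v * enorm (phi u - phi v) ^+ 2.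
    have rge : forall u v, 0 <= r u v.
      move=> u v; rewrite /r /aw; case: ifP => h; last by rewrite mul0r subrr.
      have := proj2 hphi u v h; have := enorm_ge0 (phi u - phi v); have := h1 _ h.
      by rewrite -mulrBr; move=> a b c; apply: mulr_ge0 => //; nra.
    have rsum : \sum_u \sum_v r u v = 0.
      rewrite /r (eq_bigr (fun u => \sum_v (if adj E u v then m1 [set u; v] * d [set u; v] ^+ 2 else 0)
           - \sum_v aw E m1 u v * enorm (phi u - phi v) ^+ 2)); last by move=> u _; rewrite sumrB.
      by rewrite sumrB D2; rewrite /Pf in hP; rewrite hP subrr.
    move=> u v huv.
    have hu := @psumr_eq0P _ _ _ _ (fun u _ => sumr_ge0 _ (fun v _ => rge u v)) rsum u isT.
    have := @psumr_eq0P _ _ _ _ (fun v _ => rge u v) hu v isT.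
    by rewrite /r /aw /adj huv /= => h; rewrite mulrBr.
  have tge : forall i, 0 <= Qh E m0 m1 (psi m0 phi i) - mu * Nf m0 (psi m0 phi i).
    by move=> j; rewrite subr_ge0; exact: Hmin.
  have tsum : \sum_i (Qh E m0 m1 (psi m0 phi i) - mu * Nf m0 (psi m0 phi i)) = 0.
    by rewrite sumrB -mulr_sumr hNf eqA SD subrr.
  move=> i u.
  have ti := @psumr_eq0P _ _ _ _ (fun i _ => tge i) tsum i isT.
  have ti' : Qh E m0 m1 (psi m0 phi i) = mu * Nf m0 (psi m0 phi i).
    by apply/eqP; rewrite -subr_eq0 ti.
  have geig := variational E m0 m1 mu (psi m0 phi i) hm Hmin (Kmz phi i) ti'.
  exact: (etrans (esym (lap_shift E m0 m1 (fun w => phi w 0 i) (bar m0 phi 0 i) u hm)) (geig u)).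
- move=> [phi [hphi [hi hii]]].
  apply/eqP; rewrite eq_le Dge andbT.
  apply: (le_trans (delta_le _ _ _ _ hphi)).
  have [m0'|mun] := eqVneq mu 0.
    by rewrite m0' invr0 mulr0 subr0 (mu0nb m0' phi hphi).
  have mup : 0 < mu by rewrite lt_neqAle eq_sym mun mu0.
  have hNf := sum_Nf_psi m0 phi hM (proj1 hphi).
  have QS : \sum_i Qh E m0 m1 (psi m0 phi i) =
      mu * (mass m0 - mass m0 * enorm (bar m0 phi) ^+ 2).
    rewrite -hNf mulr_sumr; apply: eq_bigr => i _.
    rewrite /Qh /Nf mulr_sumr; apply: eq_bigr => u _.
    have hl' : lap E m0 m1 (psi m0 phi i) u = mu * psi m0 phi i u :=
      etrans (lap_shift E m0 m1 (fun w => phi w 0 i) (bar m0 phi 0 i) u hm) (hii i u).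
    by rewrite hl'; ring.
  have hP : Pf E m1 phi = 2 * Dsq E d.
    rewrite -D2; apply: eq_bigr => u _; apply: eq_bigr => v _.
    rewrite /aw; case: ifP => h; last by rewrite mul0r.
    by have := hi u v h; move/eqP; rewrite mulrBr subr_eq0 => /eqP ->.
  have eqA : mu * (mass m0 - mass m0 * enorm (bar m0 phi) ^+ 2) = Dsq E d.
    by have := sum_Qh_psi E m0 m1 phi hm; rewrite hP QS; lra.
  have -> : enorm (bar m0 phi) ^+ 2 = 1 - Dsq E d / mass m0 / mu.
    by rewrite -eqA; field; rewrite M0 ?andbT ?gt_eqF.
  exact: lexx.
Qed.
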